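(* Let $\theta\in[0,1]$ and $\psi=\frac12-\frac{\theta}{4}$. On the cycle graph $C_5$, for $i\in\{1,2\}$ let $P^i_n$ be the probability that the tipsy cop and drunken robber game, started with cop and robber at distance $i$ and the robber moving first, lasts at least $n$ rounds, and let $P_i(t)=\sum_{n=0}^\infty P^i_n t^n$. Then \[ P_1(t)=\frac{1-\frac{\theta t}{4}}{\left(1-\frac{\theta t}{4}\right)(2-\psi t)-1},\qquad P_2(t)=\frac{1}{\left(1-\frac{\theta t}{4}\right)(2-\psi t)-1}. \]
   Context: Tipsy cop and drunken robber game on a graph: a cop and a robber occupy distinct vertices and alternate moves, the robber moving first; on each move the mover must move to an adjacent vertex (no staying put). The robber always moves to a uniformly random neighbor. The cop, independently at each of her moves, with probability $\theta$ moves to a uniformly random neighbor and with probability $1-\theta$ moves to a neighbor that decreases her distance to the robber (onto the robber if adjacent). All random choices are independent; the robber is captured (game over) as soon as both occupy the same vertex. A round consists of one robber move followed by one cop move; ''lasts at least $n$ rounds'' means no capture during the first $2n$ moves, and $P^i_0=1$. *)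

(* Defs.v *)
From Stdlib Require Import Reals List Arith Lra.
From Coquelicot Require Import Coquelicot.
Import ListNotations.
Open Scope R_scope.

Record graph := Graph { nbrs : nat -> list nat ; gdist : nat -> nat -> nat }.

(* Uniform average of f over the list l (the uniformly random choice among
   the elements of l). *)
Definition avg (l : list nat) (f : nat -> R) : R :=
  fold_right Rplus 0 (map f l) / INR (length l).

(* The neighbours the cop may use for a greedy move towards the robber at r:
   onto the robber if adjacent, otherwise the neighbours decreasing the
   distance to r (chosen uniformly; on C_5 this is a single vertex). *)
Definition greedy (G : graph) (c r : nat) : list nat :=
  if existsb (Nat.eqb r) (nbrs G c) then [r]
  else filter (fun c' => Nat.ltb (gdist G c' r) (gdist G c r)) (nbrs G c).

(* survive G theta n c r = probability that, with the cop at c and the robber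
   at r and the robber to move, no capture occurs during the next n rounds
   (2n moves). *)
Fixpoint survive (G : graph) (theta : R) (n : nat) (c r : nat) : R :=
  match n with
  | O => 1
  | S m =>
      avg (nbrs G r) (fun r' =>
        if Nat.eqb r' c then 0 else
        let after := fun c' => if Nat.eqb c' r' then 0 else survive G theta m c' r' in
        theta * avg (nbrs G c) after + (1 - theta) * avg (greedy G c r') after)
  end.

Definition C5 : graph :=
  Graph (fun v => [ (v + 1) mod 5 ; (v + 4) mod 5 ])%nat
        (fun u v => let k := ((u + 5 - v) mod 5)%nat in Nat.min k (5 - k)).

(* P^i_n for a start with cop at c and robber at r, gdist C5 c r = i. *)
Definition P_C5 (theta : R) (c r : nat) (n : nat) : R := survive C5 theta n c r.

(* Main.v *)
Require Import Defs.
From Stdlib Require Import Reals Lia Lra.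
From Coquelicot Require Import Coquelicot.
Open Scope R_scope.

Fixpoint ab (theta : R) (n : nat) : R * R :=
  match n with
  | O => (1, 1)
  | S m => let (a, b) := ab theta m in
      ((1/2 - theta/4) * a + theta/4 * b, (1/2 - theta/4) * a + theta/2 * b)
  end.

Lemma surv_ab theta n : forall c r, (c < 5)%nat -> (r < 5)%nat ->
  (gdist C5 c r = 1%nat -> survive C5 theta n c r = fst (ab theta n)) /\
  (gdist C5 c r = 2%nat -> survive C5 theta n c r = snd (ab theta n)).
Proof.
  induction n as [|n IH]; intros c r Hc Hr.
  - simpl; tauto.
  - assert (E : forall c r, (c < 5)%nat -> (r < 5)%nat -> forall k,
       gdist C5 c r = k -> survive C5 theta n c r =
        match k with 1%nat => fst (ab theta n) | 2%nat => snd (ab theta n) | _ => survive C5 theta n c r end).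
    { intros c0 r0 H1 H2 k Hk. destruct (IH c0 r0 H1 H2) as [A B].
      destruct k as [|[|[|]]]; auto. }
    simpl ab. destruct (ab theta n) as [a b] eqn:Hab. simpl fst in *; simpl snd in *.
    destruct c as [|[|[|[|[|c]]]]]; try lia;
    destruct r as [|[|[|[|[|r]]]]]; try lia;
    split; intro Hd; simpl in Hd; try discriminate;
    unfold survive; fold survive; unfold avg, greedy; simpl;
    repeat match goal with
      | |- context [survive ?G ?th n ?c ?r] =>
        rewrite (E c r ltac:(lia) ltac:(lia) _ eq_refl); simpl
      end; field.
Qed.
Lemma ab_bound theta n : 0 <= theta <= 1 ->
  0 <= fst (ab theta n) <= 1 /\ 0 <= snd (ab theta n) <= 1.
Proof.
  intros Ht. induction n as [|n IH]; simpl; [lra|].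
  destruct (ab theta n) as [a b]; simpl in *. split; split; nra.
Qed.

Lemma gen theta t : 0 <= theta <= 1 -> Rabs t < 1 ->
  is_series (fun n => fst (ab theta n) * t ^ n)
       ((1 - theta * t / 4) /
        ((1 - theta * t / 4) * (2 - (1/2 - theta/4) * t) - 1)) /\
  is_series (fun n => snd (ab theta n) * t ^ n)
       (1 / ((1 - theta * t / 4) * (2 - (1/2 - theta/4) * t) - 1)).
Proof.
  intros Hth Ht.
  assert (Hex : forall f : nat -> R, (forall n, Rabs (f n) <= 1) -> ex_series (fun n => f n * t ^ n)).
  { intros f Hf. apply (ex_series_le (K:=R_AbsRing) (V:=R_CompleteNormedModule) _ (fun n => Rabs t ^ n)).
    - intro n. change norm with Rabs. rewrite Rabs_mult, <- RPow_abs.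
      pose proof (pow_le (Rabs t) n (Rabs_pos t)).
      specialize (Hf n). pose proof (Rabs_pos (f n)). nra.
    - exists (/ (1 - Rabs t)). apply is_series_geom. rewrite Rabs_Rabsolu; auto. }
  assert (HA := Hex (fun n => fst (ab theta n)) ltac:(intro n; destruct (ab_bound theta n Hth); rewrite Rabs_pos_eq; lra)).
  assert (HB := Hex (fun n => snd (ab theta n)) ltac:(intro n; destruct (ab_bound theta n Hth); rewrite Rabs_pos_eq; lra)).
  apply Series_correct in HA. apply Series_correct in HB.
  set (SA := Series _) in HA. set (SB := Series _) in HB.
  assert (Hlin : forall x y, is_series (fun n => t * (x * (fst (ab theta n) * t ^ n)) + t * (y * (snd (ab theta n) * t ^ n))) (t * (x * SA) + t * (y * SB))).
  { intros x y. exact (is_series_plus (K:=R_AbsRing) _ _ _ _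
      (is_series_scal (K:=R_AbsRing) t _ _ (is_series_scal (K:=R_AbsRing) x _ _ HA))
      (is_series_scal (K:=R_AbsRing) t _ _ (is_series_scal (K:=R_AbsRing) y _ _ HB))). }
  assert (EA : SA - 1 = t * ((1/2 - theta/4) * SA) + t * (theta/4 * SB)).
  { assert (H := Series_incr_1 (fun n => fst (ab theta n) * t ^ n) (ex_intro _ SA HA)).
    cbv beta in H.
    assert (H2 : Series (fun k => fst (ab theta (S k)) * t ^ (S k)) = t * ((1/2 - theta/4) * SA) + t * (theta/4 * SB)).
    { apply is_series_unique. eapply is_series_ext; [|apply Hlin].
      intro n. simpl. destruct (ab theta n); simpl. ring. }
    rewrite H2 in H. simpl in H. fold SA in H. lra. }
  assert (EB : SB - 1 = t * ((1/2 - theta/4) * SA) + t * (theta/2 * SB)).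
  { assert (H := Series_incr_1 (fun n => snd (ab theta n) * t ^ n) (ex_intro _ SB HB)).
    cbv beta in H.
    assert (H2 : Series (fun k => snd (ab theta (S k)) * t ^ (S k)) = t * ((1/2 - theta/4) * SA) + t * (theta/2 * SB)).
    { apply is_series_unique. eapply is_series_ext; [|apply Hlin].
      intro n. simpl. destruct (ab theta n); simpl. ring. }
    rewrite H2 in H. simpl in H. fold SB in H. lra. }
  clearbody SA SB.
  set (D := (1 - theta * t / 4) * (2 - (1/2 - theta/4) * t) - 1).
  assert (HD : D > 0).
  { unfold D. apply Rabs_def2 in Ht. destruct Ht.
    assert (0 <= theta * (1 - t)) by nra.
    assert (0 <= (1/2 - theta/4) * theta * (t * t)) by (apply Rmult_le_pos; [nra| nra]).
    nra. }
  assert (E1 : SA = (1 - theta * t / 4) * SB).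
  { replace SA with (SB - ((SB - 1) - (SA - 1))) by ring. rewrite EA, EB. field. }
  assert (E2 : SB * D = 1).
  { rewrite E1 in EB.
    assert (H : SB * D - 1 = ((SB - 1) - (t * ((1/2 - theta/4) * ((1 - theta * t / 4) * SB)) + t * (theta/2 * SB)))) by (unfold D; field).
    rewrite EB in H. lra. }
  assert (E3 : SB = 1 / D) by (rewrite <- E2; field; lra).
  split.
  - replace ((1 - theta * t / 4) / D) with SA; auto. rewrite E1, E3. field. lra.
  - rewrite <- E3. auto.
Qed.

Theorem mainTheorem9 (theta : R) (Htheta : 0 <= theta <= 1) (c r : nat)
  (Hc : (c < 5)%nat) (Hr : (r < 5)%nat) (t : R) (Ht : Rabs t < 1) :
  (gdist C5 c r = 1%nat ->
     is_series (fun n => P_C5 theta c r n * t ^ n)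
       ((1 - theta * t / 4) /
        ((1 - theta * t / 4) * (2 - (1/2 - theta/4) * t) - 1))) /\
  (gdist C5 c r = 2%nat ->
     is_series (fun n => P_C5 theta c r n * t ^ n)
       (1 / ((1 - theta * t / 4) * (2 - (1/2 - theta/4) * t) - 1))).
Proof.
  destruct (gen theta t Htheta Ht) as [G1 G2].
  split; intro Hd.
  - eapply is_series_ext; [|exact G1]. intro n. unfold P_C5.
    rewrite (proj1 (surv_ab theta n c r Hc Hr) Hd). reflexivity.
  - eapply is_series_ext; [|exact G2]. intro n. unfold P_C5.
    rewrite (proj2 (surv_ab theta n c r Hc Hr) Hd). reflexivity.
Qed.
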